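(* Let $F:\mathbb{R}^{n_e}\times\mathbb{R}^{n_x}\to\mathbb{R}^{n_e}$ and $G:\mathbb{R}^{n_e}\times\mathbb{R}^{n_x}\to\mathbb{R}^{n_x}$ be $C^2$, and consider the system $$\dot e = F(e,x),\qquad \dot x = G(e,x),$$ whose solution through $(e_0,x_0)$ at $t=0$ is denoted $(E(e_0,x_0,t),X(e_0,x_0,t))$. Assume property TULES-NL holds: the system is forward complete and there exist real numbers $r>0$, $k>0$, $\lambda>0$ such that $$|E(e_0,x_0,t)|\le k|e_0|\exp(-\lambda t)\quad\text{for all }(e_0,x_0,t)\in B_e(r)\times\mathbb{R}^{n_x}\times\mathbb{R}_{\ge 0}.$$ Assume moreover that there exist positive real numbers $\rho,\mu,c$ such that the following bounds hold. - For all $x\in\mathbb{R}^{n_x}$: $\left|\frac{\partial F}{\partial e}(0,x)\right|\le\mu$ and $\left|\frac{\partial G}{\partial x}(0,x)\right|\le\rho$. - For all $(e,x)\in B_e(kr)\times\mathbb{R}^{n_x}$: $\left|\frac{\partial^2 F}{\partial e\partial e}(e,x)\right|\le c$, $\left|\frac{\partial^2 F}{\partial x\partial e}(e,x)\right|\le c$ and $\left|\frac{\partial G}{\partial e}(e,x)\right|\le c$. Then property UES-TL holds. That is: - the system $\dot{\tilde x}=\tilde G(\tilde x):=G(0,\tilde x)$ is forward complete; - there exist real numbers $\tilde k>0$ and $\tilde\lambda>0$ such that every solution $(\tilde E(\tilde e_0,\tilde x_0,t),\tilde X(\tilde x_0,t))$ of the transversally linear system $$\dot{\tilde e}=\frac{\partial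 F}{\partial e}(0,\tilde x)\,\tilde e,\qquad \dot{\tilde x}=G(0,\tilde x)$$ satisfies $|\tilde E(\tilde e_0,\tilde x_0,t)|\le\tilde k\exp(-\tilde\lambda t)|\tilde e_0|$ for all $(\tilde e_0,\tilde x_0,t)\in\mathbb{R}^{n_e}\times\mathbb{R}^{n_x}\times\mathbb{R}_{\ge0}$.
   Context: $B_e(a)$ denotes the open ball of radius $a$ centered at the origin of $\mathbb{R}^{n_e}$. The notation $|\cdot|$ denotes the Euclidean norm for vectors and the corresponding operator norm for matrices and higher derivatives. *)

(* Defs.v *)
From HB Require Import structures.
From mathcomp Require Import all_boot all_order all_algebra.
From mathcomp Require Import all_classical all_reals all_analysis.
Set Implicit Arguments. Unset Strict Implicit. Unset Printing Implicit Defensive.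
Import Order.TTheory GRing.Theory Num.Theory.
Import numFieldNormedType.Exports.
Local Open Scope classical_set_scope.
Local Open Scope ring_scope.

Definition enorm {R : realType} {n : nat} (v : 'rV[R]_n) : R :=
  Num.sqrt (\sum_(i < n) (v ord0 i) ^+ 2).

(* C^2 on a normed space: f is differentiable, every directional derivative
   p |-> Df(p)v is differentiable, and every second directional derivative
   p |-> D(Df(.)v)(p)u is continuous (in finite dimension this is C^2). *)
Definition C2 {R : realType} {V W : normedModType R} (f : V -> W) : Prop :=
  [/\ forall p, differentiable f p,
      forall (v : V) p, differentiable (fun q => derive f q v) p
    & forall (u v : V), continuous (fun p => derive (fun q => derive f q v) p u)].

Definition is_sol {R : realType} {V : normedModType R} (f : V -> V)
    (phi : R -> V) : Prop :=
  phi x @[x --> 0^'+] --> phi 0 /\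
  forall t : R, 0 < t -> is_derive t 1 phi (f (phi t)).

Definition forward_complete {R : realType} {V : normedModType R}
    (f : V -> V) : Prop :=
  forall p0 : V, exists phi : R -> V, phi 0 = p0 /\ is_sol f phi.

Section Sys.
Context {R : realType} {ne nx : nat}.
Notation E := 'rV[R]_ne.
Notation X := 'rV[R]_nx.

Definition sysF (F : E * X -> E) (G : E * X -> X) (p : E * X) : E * X :=
  (F p, G p).

Definition dFde (F : E * X -> E) (e : E) (x : X) (v : E) : E :=
  derive (fun e' : E => F (e', x)) e v.
Definition dGdx (G : E * X -> X) (e : E) (x : X) (w : X) : X :=
  derive (fun x' : X => G (e, x')) x w.
Definition dGde (G : E * X -> X) (e : E) (x : X) (v : E) : X :=
  derive (fun e' : E => G (e', x)) e v.
Definition d2Fdede (F : E * X -> E) (e : E) (x : X) (u v : E) : E :=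
  derive (fun e' : E => dFde F e' x v) e u.
Definition d2Fdxde (F : E * X -> E) (e : E) (x : X) (w : X) (v : E) : E :=
  derive (fun x' : X => dFde F e x' v) x w.

Definition redG (G : E * X -> X) (x : X) : X := G (0, x).
Definition tlF (F : E * X -> E) (G : E * X -> X) (p : E * X) : E * X :=
  (dFde F 0 p.2 p.1, G (0, p.2)).
End Sys.

(* Main.v *)
Require Import Defs.
From HB Require Import structures.
From mathcomp Require Import all_boot all_order all_algebra.
From mathcomp Require Import all_classical all_reals all_analysis.
From mathcomp Require Import ring lra.
Import Order.TTheory GRing.Theory Num.Theory.
Import numFieldNormedType.Exports.
Local Open Scope classical_set_scope.
Local Open Scope ring_scope.


Section Enorm.
Set Implicit Arguments. Unset Strict Implicit.
Context {R : realType}.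

Lemma sum_sq_le (I : Type) (r : seq I) (f : I -> R) :
  (forall i, 0 <= f i) ->
  \sum_(i <- r) f i ^+ 2 <= (\sum_(i <- r) f i) ^+ 2.
Proof.
move=> f0; elim: r => [|a r IH]; first by rewrite !big_nil expr0n.
rewrite !big_cons sqrrD; have S0 : 0 <= \sum_(i <- r) f i by apply: sumr_ge0.
have := f0 a; nra.
Qed.

Lemma enorm_ge0 n (v : 'rV[R]_n) : 0 <= enorm v.
Proof. exact: sqrtr_ge0. Qed.

Lemma enorm_coord n (v : 'rV[R]_n) i : `|v ord0 i| <= enorm v.
Proof.
rewrite /enorm -sqrtr_sqr ler_sqrt; last by apply: sumr_ge0 => j _; apply: sqr_ge0.
by rewrite (bigD1 i) //= lerDl; apply: sumr_ge0 => j _; apply: sqr_ge0.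
Qed.

Lemma enorm_le_sum n (v : 'rV[R]_n) : enorm v <= \sum_i `|v ord0 i|.
Proof.
have S0 : 0 <= \sum_i `|v ord0 i| by apply: sumr_ge0.
rewrite /enorm -(ger0_norm S0) -sqrtr_sqr ler_sqrt; last by apply: sqr_ge0.
have -> : \sum_(i < n) v ord0 i ^+ 2 = \sum_(i < n) `|v ord0 i| ^+ 2.
  by apply: eq_bigr => i _; rewrite real_normK // num_real.
exact: sum_sq_le.
Qed.

Lemma coord_le_mxnorm n (v : 'rV[R]_n) i : `|v ord0 i| <= `|v|.
Proof.
have -> : `|v| = mx_norm v by [].
rewrite mx_normrE.
by apply/bigmax_geP; right; exists (ord0, i).
Qed.

Lemma enorm_le_mx n (v : 'rV[R]_n) : enorm v <= n%:R * `|v|.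
Proof.
apply: (le_trans (@enorm_le_sum n v)).
have -> : n%:R * `|v| = \sum_(i < n) `|v| by rewrite sumr_const card_ord mulr_natl.
by apply: ler_sum => i _; apply: coord_le_mxnorm.
Qed.

Lemma enorm0 n : enorm (0 : 'rV[R]_n) = 0.
Proof.
rewrite /enorm (eq_bigr (fun _ => 0)) ?big1 ?sqrtr0 // => i _.
by rewrite mxE expr0n.
Qed.

Lemma enorm_eq0 n (v : 'rV[R]_n) : enorm v <= 0 -> v = 0.
Proof.
move=> h; apply/rowP => i; rewrite mxE; apply/eqP; rewrite -normr_eq0.
by rewrite eq_le normr_ge0 andbT (le_trans (enorm_coord v i) h).
Qed.

Lemma enormZ n (a : R) (v : 'rV[R]_n) : enorm (a *: v) = `|a| * enorm v.
Proof.
rewrite /enorm -sqrtr_sqr -sqrtrM ?sqr_ge0 //; congr Num.sqrt.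
rewrite mulr_sumr; apply: eq_bigr => i _; by rewrite mxE exprMn.
Qed.

Lemma enormN n (v : 'rV[R]_n) : enorm (- v) = enorm v.
Proof. by rewrite -scaleN1r enormZ normrN normr1 mul1r. Qed.

Lemma cauchy_schwarz n (a b : 'I_n -> R) :
  (\sum_i a i * b i) ^+ 2 <= (\sum_i a i ^+ 2) * (\sum_i b i ^+ 2).
Proof.
have H : 0 <= \sum_i \sum_j (a i * b j - a j * b i) ^+ 2.
  by apply: sumr_ge0 => i _; apply: sumr_ge0 => j _; apply: sqr_ge0.
have E1 : \sum_i \sum_j (a i * b j - a j * b i) ^+ 2 =
   \sum_i \sum_j (a i ^+ 2 * b j ^+ 2) + \sum_i \sum_j (a j ^+ 2 * b i ^+ 2)
   - 2 * \sum_i \sum_j (a i * b i * (a j * b j)).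
  rewrite mulr_sumr -big_split /= -sumrB; apply: eq_bigr => i _.
  rewrite mulr_sumr -big_split /= -sumrB; apply: eq_bigr => j _.
  ring.
have E2 : \sum_i \sum_j (a j ^+ 2 * b i ^+ 2) = \sum_i \sum_j (a i ^+ 2 * b j ^+ 2).
  by rewrite exchange_big /=; apply: eq_bigr => i _; apply: eq_bigr => j _.
have E3 : (\sum_i a i ^+ 2) * (\sum_i b i ^+ 2) = \sum_i \sum_j (a i ^+ 2 * b j ^+ 2).
  by rewrite mulr_suml; apply: eq_bigr => i _; rewrite mulr_sumr.
have E4 : (\sum_i a i * b i) ^+ 2 = \sum_i \sum_j (a i * b i * (a j * b j)).
  by rewrite expr2 mulr_suml; apply: eq_bigr => i _; rewrite mulr_sumr.
rewrite E3 E4; rewrite E1 E2 in H; lra.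
Qed.

Lemma enormD n (u v : 'rV[R]_n) : enorm (u + v) <= enorm u + enorm v.
Proof.
have Hu := enorm_ge0 u; have Hv := enorm_ge0 v.
rewrite -(ger0_norm (addr_ge0 Hu Hv)) /enorm -sqrtr_sqr ler_sqrt ?sqr_ge0 //.
have Su : \sum_(i < n) u ord0 i ^+ 2 = enorm u ^+ 2.
  by rewrite sqr_sqrtr //; apply: sumr_ge0 => i _; apply: sqr_ge0.
have Sv : \sum_(i < n) v ord0 i ^+ 2 = enorm v ^+ 2.
  by rewrite sqr_sqrtr //; apply: sumr_ge0 => i _; apply: sqr_ge0.
have CS := cauchy_schwarz (fun i => u ord0 i) (fun i => v ord0 i).
rewrite /= Su Sv in CS.
have CS' : \sum_i u ord0 i * v ord0 i <= enorm u * enorm v.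
  rewrite -(ger0_norm (mulr_ge0 Hu Hv)); apply: (le_trans (ler_norm _)).
  by rewrite -ler_sqr ?nnegrE ?normr_ge0 // !real_normK ?num_real // exprMn.
have -> : \sum_(i < n) (u + v) ord0 i ^+ 2 =
  \sum_i u ord0 i ^+ 2 + \sum_i v ord0 i ^+ 2 + 2 * \sum_i u ord0 i * v ord0 i.
  rewrite mulr_sumr -!big_split /=; apply: eq_bigr => i _; rewrite mxE; ring.
fold (enorm u) (enorm v).
rewrite Su Sv; nra.
Qed.

Lemma enormB n (u v : 'rV[R]_n) : enorm (u - v) = enorm (v - u).
Proof. by rewrite -enormN opprB. Qed.

End Enorm.


Section Deriv.
Set Implicit Arguments. Unset Strict Implicit.
Context {R : realType}.

Lemma is_derive_lin (V W : normedModType R) (L : V -> W) (f : R -> V) (t : R) (l : V) :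
  (forall (a : R) x y, L (a *: (x - y)) = a *: (L x - L y)) ->
  continuous L -> is_derive t 1 f l -> is_derive t 1 (L \o f) (L l).
Proof.
move=> Llin Lc df.
have cv : (fun h : R => h^-1 *: ((f \o shift t) (h *: 1) - f t)) @ 0^' --> l.
  by rewrite -(@derive_val _ _ _ _ _ _ _ df); exact: (@ex_derive _ _ _ _ _ _ _ df).
have cv2 : (fun h : R => h^-1 *: (((L \o f) \o shift t) (h *: 1) - (L \o f) t)) @ 0^' --> L l.
  have -> : (fun h : R => h^-1 *: (((L \o f) \o shift t) (h *: 1) - (L \o f) t)) =
     L \o (fun h : R => h^-1 *: ((f \o shift t) (h *: 1) - f t)).
    by apply/funext => h /=; rewrite Llin.
  exact: (continuous_cvg _ (Lc l) cv).
split; last by apply: cvg_lim.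
by apply/cvg_ex; exists (L l).
Qed.

Lemma fst_cont (U V : normedModType R) : continuous (@fst U V).
Proof. by move=> p; apply: cvg_fst. Qed.
Lemma snd_cont (U V : normedModType R) : continuous (@snd U V).
Proof. by move=> p; apply: cvg_snd. Qed.
Lemma coord_cont n (i : 'I_n) : continuous (fun v : 'rV[R]_n => v ord0 i).
Proof. by move=> v; apply: differentiable_continuous; apply: differentiable_coord. Qed.

Lemma is_derive_fst (U V : normedModType R) (f : R -> U * V) (t : R) (l : U * V) :
  is_derive t 1 f l -> is_derive t 1 (fst \o f) l.1.
Proof. by apply: is_derive_lin; [move=> a x y | apply: fst_cont]. Qed.
Lemma is_derive_snd (U V : normedModType R) (f : R -> U * V) (t : R) (l : U * V) :
  is_derive t 1 f l -> is_derive t 1 (snd \o f) l.2.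
Proof. by apply: is_derive_lin; [move=> a x y | apply: snd_cont]. Qed.
Lemma is_derive_coord n (f : R -> 'rV[R]_n) (t : R) (l : 'rV[R]_n) i :
  is_derive t 1 f l -> is_derive t 1 (fun s => f s ord0 i) (l ord0 i).
Proof.
move=> d; apply: (is_derive_lin (L := fun v : 'rV[R]_n => v ord0 i)) d.
  by move=> a x y; rewrite !mxE.
exact: coord_cont.
Qed.

End Deriv.


Section MV.
Set Implicit Arguments. Unset Strict Implicit.
Context {R : realType}.

Lemma is_derive_line (V W : normedModType R) (f : V -> W) (p u : V) (tau : R) :
  differentiable f (tau *: u + p) ->
  is_derive tau 1 (fun s : R => f (s *: u + p)) (derive f (tau *: u + p) u).
Proof.
move=> df.
have E : (fun h : R => h^-1 *: (((fun s : R => f (s *: u + p)) \o shift tau) (h *: 1)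
            - f (tau *: u + p))) =
         (fun h : R => h^-1 *: ((f \o shift (tau *: u + p)) (h *: u) - f (tau *: u + p))).
  apply/funext => h /=; congr (_ *: (f _ - _)).
  rewrite /shift /= (_ : h%:A = h); last by rewrite /GRing.scale /= mulr1.
  by rewrite scalerDl addrA.
have dv := diff_derivable (v:=u) df.
split; rewrite /derivable /derive /=; rewrite E //.
Qed.

Lemma mvt_enorm (V : normedModType R) n (f : V -> 'rV[R]_n) (p u : V)
    (w : 'rV[R]_n) (M : R) :
  (forall tau, 0 <= tau <= 1 -> differentiable f (tau *: u + p)) ->
  (forall tau, 0 <= tau <= 1 -> enorm (derive f (tau *: u + p) u - w) <= M) ->
  enorm (f (u + p) - f p - w) <= n%:R * M.
Proof.
move=> df bd.
apply: (le_trans (@enorm_le_sum _ n _)).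
have -> : n%:R * M = \sum_(i < n) M by rewrite sumr_const card_ord mulr_natl.
apply: ler_sum => i _.
pose g := fun s : R => f (s *: u + p) ord0 i - s * w ord0 i.
have dg : forall s : R, 0 <= s <= 1 ->
   is_derive s 1 g (derive f (s *: u + p) u ord0 i - w ord0 i).
  move=> s hs.
  have h1 := is_derive_coord i (is_derive_line (df s hs)).
  have h2 : is_derive s 1 (fun s : R => s * w ord0 i) (w ord0 i).
    have := @is_deriveZ R R R id (w ord0 i) s 1 1 (is_derive_id s 1).
    have -> : (w ord0 i *: (1:R)) = w ord0 i by rewrite /GRing.scale /= mulr1.
    have -> : (w ord0 i \*: id) = (fun s : R => s * w ord0 i).
      by apply/funext => x /=; rewrite /GRing.scale /= mulrC.
    by [].
  exact: (is_deriveB h1 h2).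
have gc : {within `[0, 1], continuous g}.
  apply: derivable_within_continuous => x; rewrite in_itv /= => hx.
  exact: (@ex_derive _ _ _ _ _ _ _ (dg x hx)).
have dg' : forall x : R, x \in `]0, 1[ ->
    is_derive x 1 g (derive f (x *: u + p) u ord0 i - w ord0 i).
  move=> x; rewrite in_itv /= => /andP[h0 h1]; apply: dg.
  by rewrite !ltW.
have [c c01 eq] := @MVT_segment R g (fun s => derive f (s *: u + p) u ord0 i - w ord0 i) 0 1 ler01
  dg' gc.
move: c01; rewrite in_itv /= => c01.
have -> : (f (u + p) - f p - w) ord0 i = g 1 - g 0.
  by rewrite /g !mxE scale1r scale0r add0r mul1r mul0r subr0; ring.
rewrite eq subr0 mulr1.
apply: le_trans (bd c c01).
have <- : ('D_u f (c *: u + p) - w) ord0 i = 'D_u f (c *: u + p) ord0 i - w ord0 i.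
  by rewrite !mxE.
exact: enorm_coord.
Qed.
End MV.


Section Dini.
Set Implicit Arguments. Unset Strict Implicit.
Context {R : realType}.

Lemma dini_enorm n (f : R -> 'rV[R]_n) (t : R) (l : 'rV[R]_n) :
  is_derive t 1 f l -> forall eps : R, 0 < eps ->
  exists2 eta : R, 0 < eta & forall h : R, 0 < h < eta ->
    enorm (f (t + h)) <= enorm (f t) + h * (enorm l + eps).
Proof.
move=> df eps eps0.
have cv : (fun h : R => h^-1 *: ((f \o shift t) (h *: 1) - f t)) @ 0^' --> l.
  by rewrite -(@derive_val _ _ _ _ _ _ _ df); exact: (@ex_derive _ _ _ _ _ _ _ df).
have e0 : 0 < eps / (n%:R + 1) by apply: divr_gt0 => //; rewrite ltr_wpDl.
move/cvgr_dist_lt: cv => /(_ _ e0); rewrite near_withinE => /nbhs_ballP [d /= d0 H].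
exists d => // h /andP[h0 hd].
have hb : ball 0 d h by rewrite /ball /= sub0r normrN gtr0_norm.
have := H h hb (lt0r_neq0 h0) => /=.
rewrite (_ : h%:A = h); last by rewrite /GRing.scale /= mulr1.
set q := h^-1 *: _ => Hq.
have E : f (t + h) = f t + h *: q.
  by rewrite /q scalerA mulfV ?lt0r_neq0 // scale1r (addrC h t) [f t + _]addrC subrK.
have Hq2 : enorm (q - l) <= eps.
  rewrite enormB; apply: le_trans (enorm_le_mx _) _.
  have n0 : 0 <= (n%:R : R) by [].
  apply: le_trans (ler_wpM2l n0 (ltW Hq)) _.
  rewrite mulrA ler_pdivrMr ?ltr_wpDl //; nra.
have Hql : enorm q <= enorm l + eps.
  have -> : q = l + (q - l) by rewrite addrC subrK.
  by apply: le_trans (enormD _ _) _; rewrite lerD2l.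
rewrite E; apply: le_trans (enormD _ _) _; rewrite lerD2l enormZ gtr0_norm //.
by rewrite ler_pM2l.
Qed.
End Dini.


Section Gronwall.
Set Implicit Arguments. Unset Strict Implicit.
Context {R : realType}.

Lemma gronwall (p : R -> R) (a b T : R) :
  0 <= a -> 0 < b -> p 0 <= 0 ->
  (forall eps, 0 < eps -> exists2 eta, 0 < eta &
     forall u, 0 <= u < eta -> p u < p 0 + eps) ->
  (forall t, 0 < t <= T -> forall eps, 0 < eps -> exists2 eta, 0 < eta &
     forall u, 0 <= u -> `|u - t| < eta -> p t - eps < p u) ->
  (forall t, 0 < t < T -> forall eps, 0 < eps -> exists2 eta, 0 < eta &
     forall h, 0 < h < eta -> p (t + h) <= p t + h * (a + b * p t + eps)) ->
  forall del, 0 < del -> forall t, 0 <= t <= T ->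
    p t <= ((a + del) / b + del) * expR (b * t) - (a + del) / b.
Proof.
move=> a0 b0 p0 Hr0 Hlsc Hdini del del0.
set C := (a + del) / b. set K := C + del.
pose w := fun t => K * expR (b * t) - C.
have C0 : 0 < C by rewrite /C divr_gt0 // ltr_wpDl.
have K0 : 0 < K by rewrite /K addr_gt0.
have wmono : forall s t, s <= t -> w s <= w t.
  move=> s t st; rewrite /w lerD2r ler_pM2l // ler_expR ler_pM2l //.
have w0 : w 0 = del by rewrite /w mulr0 expR0 mulr1 /K addrC addKr.
have wconv : forall s h, 0 <= h -> w s + h * (b * w s + a + del) <= w (s + h).
  move=> s h h0; rewrite /w (mulrDr b s h) expRD.
  have e1 := expR_ge1Dx (b * h).
  have e2 := expR_gt0 (b * s).
  have bC : b * C = a + del by rewrite /C mulrC divfK // gt_eqF.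
  have : K * expR (b * s) * (1 + b * h) <= K * expR (b * s) * expR (b * h).
    by rewrite ler_pM2l ?mulr_gt0.
  nra.
move=> t1 /andP[t10 t1T].
rewrite -/(w t1) leNgt; apply/negP => Hpt1.
pose S := [set s | 0 <= s <= t1 /\ forall u, 0 <= u <= s -> p u <= w u].
have S0 : S 0.
  split; first by rewrite lexx t10.
  move=> u /andP[u0 u0']; have -> : u = 0 by apply/eqP; rewrite eq_le u0 u0'.
  by rewrite w0; apply: le_trans p0 (ltW del0).
have Sub : ubound S t1 by move=> s [/andP[_ ?] _].
have hsS : has_sup S by split; [exists 0 | exists t1].
set ss := sup S.
have ss0 : 0 <= ss by apply: sup_upper_bound.
have sst1 : ss <= t1 by apply: ge_sup => //; exists 0.
have C1 : forall u, 0 <= u < ss -> p u <= w u.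
  move=> u /andP[u0 uss].
  have su : 0 < ss - u by rewrite subr_gt0.
  have [e [_ He] he] := @sup_adherent _ S _ su hsS.
  apply: He; rewrite u0 /=; move: he; rewrite /ss; lra.
have t1pos : 0 < t1.
  rewrite lt_neqAle t10 andbT; apply/eqP => t1E; move: Hpt1.
  by rewrite -t1E w0 ltNge (le_trans p0 (ltW del0)).
have C2 : 0 < ss.
  rewrite lt_neqAle ss0 andbT; apply/eqP => ssE.
  have [eta eta0 Heta] := Hr0 del del0.
  pose s1 := Num.min (eta / 2) t1.
  have s1pos : 0 < s1 by rewrite lt_min t1pos divr_gt0.
  have : S s1.
    split; first by rewrite ltW // ge_min lexx orbT.
    move=> u /andP[u0 us1].
    have ueta : u < eta.
      have : s1 <= eta / 2 by rewrite ge_min lexx.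
      lra.
    apply: le_trans (ltW (Heta u _)) _; first by rewrite u0.
    by rewrite -w0; apply: le_trans (wmono 0 u u0); lra.
  move/sup_upper_bound: hsS => /[apply]; rewrite -/ss -ssE; lra.
have C3 : p ss <= w ss.
  rewrite leNgt; apply/negP => Hc.
  have Hc' : 0 < p ss - w ss by rewrite subr_gt0.
  have ssT : 0 < ss <= T by rewrite C2 (le_trans sst1 t1T).
  have [eta eta0 Heta] := Hlsc ss ssT _ Hc'.
  pose m := Num.min eta ss.
  have m0 : 0 < m by rewrite lt_min eta0 C2.
  have meta : m <= eta by rewrite ge_min lexx.
  have mss : m <= ss by rewrite ge_min lexx orbT.
  have u0 : 0 <= ss - m / 2 by lra.
  have ud : `|ss - m / 2 - ss| < eta.
    rewrite (_ : ss - m / 2 - ss = - (m / 2)); last by ring.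
    by rewrite normrN gtr0_norm ?divr_gt0 //; lra.
  have H1 := Heta _ u0 ud.
  have H2 : p (ss - m / 2) <= w (ss - m / 2) by apply: C1; rewrite u0 /=; lra.
  have H3 : w (ss - m / 2) <= w ss by apply: wmono; lra.
  lra.
have Sss : S ss.
  split; first by rewrite ss0 sst1.
  move=> u /andP[u0 uss]; case: (ltP u ss) => hu; first by apply: C1; rewrite u0 hu.
  have -> : u = ss by apply/eqP; rewrite eq_le uss hu.
  exact: C3.
have sslt : ss < t1.
  rewrite lt_neqAle sst1 andbT; apply/eqP => E.
  case: Sss => _ /(_ t1); rewrite -E lexx ss0 => /(_ isT); rewrite E; lra.
have ssT : 0 < ss < T by rewrite C2 (lt_le_trans sslt t1T).
have del2 : 0 < del / 2 by rewrite divr_gt0.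
have [eta eta0 Heta] := Hdini ss ssT _ del2.
pose m := Num.min (eta / 2) (t1 - ss).
have m0 : 0 < m by rewrite lt_min divr_gt0 //= subr_gt0.
have meta : m <= eta / 2 by rewrite ge_min lexx.
have mt : m <= t1 - ss by rewrite ge_min lexx orbT.
have : S (ss + m).
  split; first by apply/andP; split; lra.
  move=> u /andP[u0 us]; case: (leP u ss) => hu.
    by case: Sss => _; apply; rewrite u0 hu.
  have hpos : 0 < u - ss by rewrite subr_gt0.
  have heta : 0 < u - ss < eta by rewrite hpos /=; lra.
  have H1 := Heta _ heta.
  have H2 := wconv ss (u - ss) (ltW hpos).
  rewrite (_ : ss + (u - ss) = u) in H1 H2; last by ring.
  have H3 : 0 <= (u - ss) * b * (w ss - p ss).
    by rewrite mulr_ge0 // ?mulr_ge0 ?subr_ge0 // ltW.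
  nra.
move/(sup_upper_bound hsS); rewrite -/ss; lra.
Qed.
End Gronwall.


Section Partial.
Set Implicit Arguments. Unset Strict Implicit.
Context {R : realType} {ne nx : nat}.
Notation E := 'rV[R]_ne.
Notation X := 'rV[R]_nx.

Lemma derive_partial1 (W : normedModType R) (f : E * X -> W) e x v :
  derive (fun e' : E => f (e', x)) e v = derive f (e, x) (v, 0).
Proof.
rewrite /derive.
have -> : (fun h : R => h^-1 *: (((fun e' : E => f (e', x)) \o shift e) (h *: v) - f (e, x)))
  = (fun h : R => h^-1 *: ((f \o shift (e, x)) (h *: (v, (0 : X))) - f (e, x))).
  apply/funext => h /=; rewrite /shift /=; congr (_ *: (f _ - _)).
  by apply: injective_projections => //=; rewrite scaler0 add0r.
by [].
Qed.

Lemma derive_partial2 (W : normedModType R) (f : E * X -> W) e x w :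
  derive (fun x' : X => f (e, x')) x w = derive f (e, x) (0, w).
Proof.
rewrite /derive.
have -> : (fun h : R => h^-1 *: (((fun x' : X => f (e, x')) \o shift x) (h *: w) - f (e, x)))
  = (fun h : R => h^-1 *: ((f \o shift (e, x)) (h *: ((0 : E), w)) - f (e, x))).
  apply/funext => h /=; rewrite /shift /=; congr (_ *: (f _ - _)).
  by apply: injective_projections => //=; rewrite scaler0 add0r.
by [].
Qed.

Lemma diff_partial1 (W : normedModType R) (f : E * X -> W) e x :
  differentiable f (e, x) -> differentiable (fun e' : E => f (e', x)) e.
Proof.
move=> df.
have -> : (fun e' : E => f (e', x)) = f \o (fun e' : E => (e', x)) by [].
by apply: differentiable_comp.
Qed.

Lemma diff_partial2 (W : normedModType R) (f : E * X -> W) e x :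
  differentiable f (e, x) -> differentiable (fun x' : X => f (e, x')) x.
Proof.
move=> df.
have -> : (fun x' : X => f (e, x')) = f \o (fun x' : X => (e, x')) by [].
by apply: differentiable_comp.
Qed.

End Partial.


Section Sys.
Set Implicit Arguments. Unset Strict Implicit.
Context {R : realType} {ne nx : nat}.
Notation E := 'rV[R]_ne.
Notation X := 'rV[R]_nx.
Variables (F : E * X -> E) (G : E * X -> X).
Hypothesis CF : C2 F.
Hypothesis CG : C2 G.

Lemma diffF1 e x : differentiable (fun e' : E => F (e', x)) e.
Proof. by case: CF => dF _ _; apply: diff_partial1. Qed.
Lemma diffG1 e x : differentiable (fun e' : E => G (e', x)) e.
Proof. by case: CG => dG _ _; apply: diff_partial1. Qed.
Lemma diffG2 e x : differentiable (fun x' : X => G (e, x')) x.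
Proof. by case: CG => dG _ _; apply: diff_partial2. Qed.

Lemma diff_dFde1 e x v : differentiable (fun e' : E => dFde F e' x v) e.
Proof.
have -> : (fun e' : E => dFde F e' x v) =
   (fun q => derive F q (v, (0 : X))) \o (fun e' : E => (e', x)).
  by apply/funext => e' /=; rewrite /dFde derive_partial1.
case: CF => _ dF2 _; apply: differentiable_comp => //.
Qed.

Lemma diff_dFde2 e x v : differentiable (fun x' : X => dFde F e x' v) x.
Proof.
have -> : (fun x' : X => dFde F e x' v) =
   (fun q => derive F q (v, (0 : X))) \o (fun x' : X => (e, x')).
  by apply/funext => x' /=; rewrite /dFde derive_partial1.
case: CF => _ dF2 _; apply: differentiable_comp => //.
Qed.

Lemma dFdeE e x v : dFde F e x v = 'd (fun e' : E => F (e', x)) e v.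
Proof. by rewrite /dFde deriveE //; apply: diffF1. Qed.

Lemma dFdeB e x u v : dFde F e x (u - v) = dFde F e x u - dFde F e x v.
Proof. by rewrite !dFdeE linearB. Qed.
Lemma dFdeZ e x (a : R) v : dFde F e x (a *: v) = a *: dFde F e x v.
Proof. by rewrite !dFdeE linearZ. Qed.

Lemma mv_Ge (c : R) e x :
  (forall e' : E, enorm e' <= enorm e -> forall v, enorm (dGde G e' x v) <= c * enorm v) ->
  enorm (G (e, x) - G (0, x)) <= nx%:R * (c * enorm e).
Proof.
move=> bd.
have := @mvt_enorm R E nx (fun e' : E => G (e', x)) 0 e 0 (c * enorm e).
rewrite addr0 subr0; apply.
  by move=> tau _; apply: diffG1.
move=> tau /andP[t0 t1]; rewrite subr0 addr0; apply: bd.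
by rewrite enormZ ger0_norm // ler_piMl // enorm_ge0.
Qed.

Lemma mv_Gx (rho : R) x x' :
  (forall (y w : X), enorm (dGdx G 0 y w) <= rho * enorm w) ->
  enorm (G (0, x) - G (0, x')) <= nx%:R * (rho * enorm (x - x')).
Proof.
move=> bd.
have := @mvt_enorm R X nx (fun y : X => G (0, y)) x' (x - x') 0 (rho * enorm (x - x')).
rewrite subrK subr0; apply.
  by move=> tau _; apply: diffG2.
by move=> tau _; rewrite subr0; apply: bd.
Qed.

Lemma mv_dFx (c : R) x x' v :
  (forall (y w : X) (v : E), enorm (d2Fdxde F 0 y w v) <= c * enorm w * enorm v) ->
  enorm (dFde F 0 x v - dFde F 0 x' v) <= ne%:R * (c * enorm (x - x') * enorm v).
Proof.
move=> bd.
have := @mvt_enorm R X ne (fun y : X => dFde F 0 y v) x' (x - x') 0 (c * enorm (x - x') * enorm v).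
rewrite subrK subr0; apply.
  by move=> tau _; apply: diff_dFde2.
by move=> tau _; rewrite subr0; apply: bd.
Qed.

Lemma mv_Fe (c : R) e x : 0 <= c ->
  (forall e' : E, enorm e' <= enorm e -> forall u v : E,
      enorm (d2Fdede F e' x u v) <= c * enorm u * enorm v) ->
  enorm (F (e, x) - F (0, x) - dFde F 0 x e) <= ne%:R * (ne%:R * (c * enorm e * enorm e)).
Proof.
move=> c0 bd.
have := @mvt_enorm R E ne (fun e' : E => F (e', x)) 0 e (dFde F 0 x e)
   (ne%:R * (c * enorm e * enorm e)).
rewrite addr0; apply.
  by move=> tau _; apply: diffF1.
move=> tau /andP[t0 t1]; rewrite addr0.
have He : enorm (tau *: e) <= enorm e.
  by rewrite enormZ ger0_norm // ler_piMl // enorm_ge0.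
have := @mvt_enorm R E ne (fun e' : E => dFde F e' x e) 0 (tau *: e) 0 (c * enorm e * enorm e).
rewrite !addr0 !subr0; apply.
  by move=> sig _; apply: diff_dFde1.
move=> sig /andP[s0 s1]; rewrite addr0 subr0.
have Hs : enorm (sig *: (tau *: e)) <= enorm e.
  rewrite enormZ ger0_norm //; apply: le_trans He.
  by rewrite ler_piMl // enorm_ge0.
apply: le_trans (bd _ Hs _ _) _.
by rewrite ler_wpM2r ?enorm_ge0 // ler_wpM2l.
Qed.

End Sys.


Section Cont.
Set Implicit Arguments. Unset Strict Implicit.
Context {R : realType}.

Lemma enorm_diff_le n (a b : 'rV[R]_n) : enorm a <= enorm b + n%:R * `|b - a|.
Proof.
have := enormD b (a - b); rewrite (addrC b (a - b)) subrK => H.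
apply: le_trans H _; rewrite lerD2l.
by rewrite enormB; apply: enorm_le_mx.
Qed.

Lemma small_eps n (eps : R) : 0 < eps ->
  0 < eps / (n%:R + 1) /\ n%:R * (eps / (n%:R + 1)) < eps.
Proof.
move=> e0; have n1 : 0 < (n%:R : R) + 1 by rewrite ltr_wpDl.
split; first by rewrite divr_gt0.
by rewrite mulrA ltr_pdivrMr //; nra.
Qed.

Lemma rc0_enorm n (f : R -> 'rV[R]_n) : f @ 0^'+ --> f 0 ->
  forall eps, 0 < eps -> exists2 eta, 0 < eta &
    forall u, 0 <= u < eta -> enorm (f u) < enorm (f 0) + eps.
Proof.
move=> cv eps e0; have [e1 e2] := small_eps n e0.
move/cvgr_dist_lt: cv => /(_ _ e1); rewrite near_withinE => /nbhs_ballP [d /= d0 H].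
exists d => // u /andP[u0 ud].
case: (ltrP 0 u) => u0'; last first.
  have -> : u = 0 by apply/eqP; rewrite eq_le u0' u0.
  by rewrite ltrDl.
have hb : ball 0 d u by rewrite /ball /= sub0r normrN gtr0_norm.
have := H u hb u0' => /= Hu.
apply: le_lt_trans (enorm_diff_le (f u) (f 0)) _; rewrite ltrD2l.
apply: le_lt_trans e2; apply: ler_wpM2l => //; exact: ltW.
Qed.

Lemma lsc_enorm n (f : R -> 'rV[R]_n) (t : R) : {for t, continuous f} ->
  forall eps, 0 < eps -> exists2 eta, 0 < eta &
    forall u, `|u - t| < eta -> enorm (f t) - eps < enorm (f u).
Proof.
move=> cv eps e0; have [e1 e2] := small_eps n e0.
move/cvgr_dist_lt: cv => /(_ _ e1) /nbhs_ballP [d /= d0 H].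
exists d => // u ud.
have hb : ball t d u by rewrite /ball /= distrC.
have Hu := H u hb.
rewrite ltrBlDr; apply: le_lt_trans (enorm_diff_le (f t) (f u)) _; rewrite ltrD2l.
rewrite distrC in Hu.
apply: le_lt_trans e2; apply: ler_wpM2l => //; exact: ltW.
Qed.

Lemma is_derive_cont (V : normedModType R) (f : R -> V) (t : R) (l : V) :
  is_derive t 1 f l -> {for t, continuous f}.
Proof.
move=> df; apply: differentiable_continuous; apply/derivable1_diffP.
exact: (@ex_derive _ _ _ _ _ _ _ df).
Qed.

End Cont.


Section Zero.
Set Implicit Arguments. Unset Strict Implicit.
Context {R : realType}.

Lemma deriv_zero (V : normedModType R) (f : R -> V) (t : R) (l : V) :
  0 < t -> (forall s, 0 < s -> f s = 0) -> is_derive t 1 f l -> l = 0.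
Proof.
move=> t0 fz df.
have cv : (fun h : R => h^-1 *: ((f \o shift t) (h *: 1) - f t)) @ 0^' --> l.
  by rewrite -(@derive_val _ _ _ _ _ _ _ df); exact: (@ex_derive _ _ _ _ _ _ _ df).
have cv0 : (fun h : R => h^-1 *: ((f \o shift t) (h *: 1) - f t)) @ 0^' --> (0 : V).
  apply: cvg_near_cst; rewrite near_withinE; apply/nbhs_ballP.
  exists t => // h /=; rewrite /ball /= sub0r normrN => ht _.
  rewrite (_ : h%:A = h); last by rewrite /GRing.scale /= mulr1.
  have : - t < h by move: ht; rewrite ltr_norml => /andP[].
  move=> hT; rewrite (fz (h + t)) ?(fz t) ?subr0 ?scaler0 //.
  lra.
exact: (cvg_unique _ cv cv0).
Qed.

Lemma rc_zero (V W : normedModType R) (f : R -> V) (g : V -> W) :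
  f x @[x --> 0^'+] --> f 0 -> {for f 0, continuous g} ->
  (forall s, 0 < s -> g (f s) = 0) -> g (f 0) = 0.
Proof.
move=> cf cg gz.
have c1 : (g \o f) @ 0^'+ --> g (f 0) by apply: continuous_cvg.
have c2 : (g \o f) @ 0^'+ --> (0 : W).
  apply: cvg_near_cst; rewrite near_withinE; apply/nbhs_ballP.
  by exists 1 => [|h _ /= h0]; [exact: ltr01 | apply: gz].
exact: (cvg_unique _ c1 c2).
Qed.

End Zero.


Section Arith.
Set Implicit Arguments. Unset Strict Implicit.
Context {R : realType}.

Lemma le_small (A B D a r : R) : 0 <= D -> 0 <= a -> 0 < r ->
  (forall s, 0 < s -> s * a < r -> A <= B + s * D) -> A <= B.
Proof.
move=> D0 a0 r0 H; rewrite leNgt; apply/negP => AB.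
have a1 : 0 < a + 1 by rewrite ltr_wpDl.
have D1 : 0 < D + 1 by rewrite ltr_wpDl.
pose s := Num.min (r / (a + 1)) ((A - B) / (D + 1)).
have s1 : s <= r / (a + 1) by rewrite ge_min lexx.
have s2 : s <= (A - B) / (D + 1) by rewrite ge_min lexx orbT.
have sp : 0 < s by rewrite lt_min !divr_gt0 // subr_gt0.
have h1 : s * (a + 1) <= r by rewrite -ler_pdivlMr.
have h2 : s * (D + 1) <= A - B by rewrite -ler_pdivlMr.
have := H s sp; rewrite (_ : s * a < r = true); last by apply/idP; nra.
move=> /(_ isT); nra.
Qed.

Lemma gron_bound (a b s T t : R) : 0 <= a -> 0 < b -> 0 < s -> 0 <= t <= T ->
  ((s * a + s) / b + s) * expR (b * t) - (s * a + s) / b <=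
  s * (((a + 1) / b + 1) * expR (b * T)).
Proof.
move=> a0 b0 s0 /andP[t0 tT].
have K : (s * a + s) / b + s = s * ((a + 1) / b + 1) by ring.
have C0 : 0 <= (s * a + s) / b.
  apply: divr_ge0; last exact: ltW.
  have : 0 <= s * a by rewrite mulr_ge0 // ltW.
  lra.
have K1 : 0 <= (a + 1) / b by apply: divr_ge0; lra.
have K0 : 0 <= (a + 1) / b + 1 by lra.
have E : expR (b * t) <= expR (b * T) by rewrite ler_expR ler_wpM2l // ltW.
rewrite K -mulrA; apply: le_trans (_ : s * (((a + 1) / b + 1) * expR (b * t)) <= _).
  by rewrite lerBlDr lerDl.
apply: ler_wpM2l; first exact: ltW.
exact: ler_wpM2l.
Qed.

End Arith.

Theorem proposition1 (R : realType) (ne nx : nat)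
  (F : 'rV[R]_ne * 'rV[R]_nx -> 'rV[R]_ne)
  (G : 'rV[R]_ne * 'rV[R]_nx -> 'rV[R]_nx) :
  C2 F -> C2 G ->
  (* TULES-NL *)
  forward_complete (sysF F G) ->
  forall r k lam : R, 0 < r -> 0 < k -> 0 < lam ->
  (forall (phi : R -> 'rV[R]_ne * 'rV[R]_nx), is_sol (sysF F G) phi ->
     enorm (phi 0).1 < r ->
     forall t : R, 0 <= t ->
       enorm (phi t).1 <= k * enorm (phi 0).1 * expR (- lam * t)) ->
  (* bounds on derivatives *)
  forall rho mu c : R, 0 < rho -> 0 < mu -> 0 < c ->
  (forall (x : 'rV[R]_nx) (v : 'rV[R]_ne),
     enorm (dFde F 0 x v) <= mu * enorm v) ->
  (forall (x w : 'rV[R]_nx),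
     enorm (dGdx G 0 x w) <= rho * enorm w) ->
  (forall (e : 'rV[R]_ne) (x : 'rV[R]_nx), enorm e < k * r ->
     [/\ forall u v : 'rV[R]_ne,
           enorm (d2Fdede F e x u v) <= c * enorm u * enorm v,
         forall (w : 'rV[R]_nx) (v : 'rV[R]_ne),
           enorm (d2Fdxde F e x w v) <= c * enorm w * enorm v
       & forall v : 'rV[R]_ne, enorm (dGde G e x v) <= c * enorm v]) ->
  (* UES-TL *)
  forward_complete (redG G) /\
  exists kt lamt : R, 0 < kt /\ 0 < lamt /\
    forall (phi : R -> 'rV[R]_ne * 'rV[R]_nx), is_sol (tlF F G) phi ->
      forall t : R, 0 <= t ->
        enorm (phi t).1 <= kt * expR (- lamt * t) * enorm (phi 0).1.
Proof.
move=> CF CG fc r k lam r0 k0 lam0 tules rho mu c rho0 mu0 c0 bFe bGx bnd.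
have kr0 : 0 < k * r by rewrite mulr_gt0.
have zsol : forall x0 : 'rV[R]_nx, exists phi : R -> 'rV[R]_ne * 'rV[R]_nx,
    phi 0 = (0, x0) /\ is_sol (sysF F G) phi /\ forall t, 0 <= t -> (phi t).1 = 0.
  move=> x0; have [phi [p0 sol]] := fc (0, x0); exists phi; split => //; split => // t t0.
  apply: enorm_eq0.
  have h0 : enorm (phi 0).1 < r by rewrite p0 /= enorm0.
  by have := tules phi sol h0 t t0; rewrite p0 /= enorm0 mulr0 mul0r.
have Fz : forall x, F (0, x) = 0.
  move=> x; have [phi [p0 [[rc dv] z]]] := zsol x.
  rewrite -p0; apply: (rc_zero rc).
    by case: CF => dF _ _; apply: differentiable_continuous.
  move=> s s0.
  apply: (deriv_zero (f := fst \o phi) s0 _ (is_derive_fst (dv s s0))).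
  by move=> s' s'0; apply: z; apply: ltW.
split.
  move=> x0; have [phi [p0 [[rc dv] z]]] := zsol x0.
  exists (snd \o phi); split; first by rewrite /= p0.
  split.
    have sc : {for phi 0, continuous (@snd 'rV[R]_ne 'rV[R]_nx)} by apply: snd_cont.
    exact: (@continuous_cvg _ _ _ _ _ phi snd (phi 0) sc rc).
  move=> t t0; apply: is_derive_eq (is_derive_snd (dv t t0)) _.
  rewrite /redG /=; move: (z t (ltW t0)); case: (phi t) => a b /= -> //.
exists k, lam; split => //; split => //.
move=> phi [rcphi dvphi] t0 t00.
set e0 := (phi 0).1; set x0 := (phi 0).2; set ae := enorm e0.
have ae0 : 0 <= ae by apply: enorm_ge0.
have c0' : 0 <= c by apply: ltW.
have nx0 : 0 <= (nx%:R : R) by [].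
have ne0 : 0 <= (ne%:R : R) by [].
have [by_ byd] : exists by_ : R, by_ = nx%:R * rho + 1 by eexists.
have by0 : 0 < by_ by rewrite byd ltr_wpDl // mulr_ge0 // ltW.
have k0' : 0 <= k by apply: ltW.
have [Ay Ayd] : exists Ay : R, Ay = nx%:R * c * k * ae by eexists.
have Ay0 : 0 <= Ay by rewrite Ayd !mulr_ge0.
have [Y Yd] : exists Y : R, Y = ((Ay + 1) / by_ + 1) * expR (by_ * t0) by eexists.
have Y0 : 0 <= Y.
  have h : 0 <= (Ay + 1) / by_ by apply: divr_ge0; lra.
  by rewrite Yd mulr_ge0 ?expR_ge0 //; lra.
have [Ad Add] : exists Ad : R,
  Ad = ne%:R * (ne%:R * (c * k * k * ae * ae)) + ne%:R * c * Y * k * ae by eexists.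
have Ad0 : 0 <= Ad.
  have h1 : 0 <= ne%:R * (ne%:R * (c * k * k * ae * ae)) by rewrite !mulr_ge0.
  have h2 : 0 <= ne%:R * c * Y * k * ae by rewrite !mulr_ge0.
  by rewrite Add; lra.
have [Dd Ddd] : exists Dd : R, Dd = ((Ad + 1) / mu + 1) * expR (mu * t0) by eexists.
have Dd0 : 0 <= Dd.
  have h : 0 <= (Ad + 1) / mu by apply: divr_ge0; lra.
  by rewrite Ddd mulr_ge0 ?expR_ge0 //; lra.
have bGde : forall e x, enorm e < k * r -> forall v, enorm (dGde G e x v) <= c * enorm v.
  by move=> e x h; case: (bnd e x h).
have bFee : forall e x, enorm e < k * r -> forall u v,
    enorm (d2Fdede F e x u v) <= c * enorm u * enorm v.
  by move=> e x h; case: (bnd e x h).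
have bFxe : forall (x w : 'rV[R]_nx) (v : 'rV[R]_ne),
    enorm (d2Fdxde F 0 x w v) <= c * enorm w * enorm v.
  move=> x w v; have h : enorm (0 : 'rV[R]_ne) < k * r by rewrite enorm0.
  by case: (bnd 0 x h) => _ h2 _; apply: h2.
apply: (@le_small R _ _ Dd ae r Dd0 ae0 r0) => s s0 sr.
have [psi [psi0 [rcpsi dvpsi]]] := fc (s *: e0, x0).
have sol : is_sol (sysF F G) psi by split.
have psi0n : enorm (psi 0).1 = s * ae by rewrite psi0 /= enormZ gtr0_norm.
have Ebd0 : forall t, 0 <= t -> enorm (psi t).1 <= k * (s * ae) * expR (- lam * t).
  by move=> t t0'; rewrite -psi0n; apply: tules => //; rewrite psi0n.
have Ebd : forall t, 0 <= t -> enorm (psi t).1 <= k * (s * ae).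
  move=> t t0'; apply: le_trans (Ebd0 t t0') _.
  have hk : 0 <= k * (s * ae) by rewrite !mulr_ge0 // ltW.
  have he : expR (- lam * t) <= 1 by rewrite expR_le1 mulNr oppr_le0 mulr_ge0 // ltW.
  by rewrite -[X in _ <= X]mulr1 ler_wpM2l.
have Ekr : forall t, 0 <= t -> enorm (psi t).1 < k * r.
  by move=> t t0'; apply: le_lt_trans (Ebd t t0') _; rewrite ltr_pM2l.
have sc1 : {for psi 0, continuous (@snd 'rV[R]_ne 'rV[R]_nx)} by apply: snd_cont.
have sc2 : {for phi 0, continuous (@snd 'rV[R]_ne 'rV[R]_nx)} by apply: snd_cont.
have fc1 : {for psi 0, continuous (@fst 'rV[R]_ne 'rV[R]_nx)} by apply: fst_cont.
have fc2 : {for phi 0, continuous (@fst 'rV[R]_ne 'rV[R]_nx)} by apply: fst_cont.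
pose y := (snd \o psi) - (snd \o phi).
have dy : forall t : R, 0 < t -> is_derive t 1 y (G (psi t) - G (0, (phi t).2)).
  move=> t t0'.
  exact: (is_deriveB (is_derive_snd (dvpsi t t0')) (is_derive_snd (dvphi t t0'))).
have yE : forall t : R, y t = (psi t).2 - (phi t).2 by [].
have y0 : y 0 = 0 by rewrite yE psi0 /= subrr.
have rcy : y @ 0^'+ --> y 0.
  exact: (cvgB (continuous_cvg _ sc1 rcpsi) (continuous_cvg _ sc2 rcphi)).
have Hy := @gronwall R (fun t => enorm (y t)) (s * Ay) by_ t0.
have sAy0 : 0 <= s * Ay by rewrite mulr_ge0 // ltW.
have p00 : enorm (y 0) <= 0 by rewrite y0 enorm0.
have := Hy sAy0 by0 p00 (rc0_enorm rcy).
have Hl : forall t : R, 0 < t <= t0 -> forall eps : R, 0 < eps -> exists2 eta : R, 0 < eta &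
     forall u : R, 0 <= u -> `|u - t| < eta -> enorm (y t) - eps < enorm (y u).
  move=> t /andP[t0' _] eps e0'.
  have [eta eta0 H] := lsc_enorm (is_derive_cont (dy t t0')) e0'.
  by exists eta => // u _; apply: H.
move=> /(_ Hl) {Hl}.
have Hd : forall t : R, 0 < t < t0 -> forall eps : R, 0 < eps -> exists2 eta : R, 0 < eta &
     forall h : R, 0 < h < eta -> enorm (y (t + h)) <=
       enorm (y t) + h * (s * Ay + by_ * enorm (y t) + eps).
  move=> t /andP[t0' tt0] eps e0'.
  have [eta eta0 H] := dini_enorm (dy t t0') e0'.
  exists eta => // h hh; apply: le_trans (H h hh) _; rewrite lerD2l.
  have h0 : 0 <= h by case/andP: hh => /ltW.
  rewrite ler_wpM2l // lerD2r.
  rewrite yE.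
  move: (Ekr t (ltW t0')) (Ebd t (ltW t0')).
  case: (psi t) => E1 X1 /= hE1 hE2.
  have h1 := mv_Ge CG (fun e' he' => bGde e' X1 (le_lt_trans he' hE1)).
  have h2 := mv_Gx CG X1 (phi t).2 bGx.
  have -> : G (E1, X1) - G (0, (phi t).2) =
     (G (E1, X1) - G (0, X1)) + (G (0, X1) - G (0, (phi t).2)) by rewrite addrA subrK.
  apply: le_trans (enormD _ _) _.
  have h3 : nx%:R * (c * enorm E1) <= s * Ay.
    rewrite Ayd (_ : s * (nx%:R * c * k * ae) = nx%:R * (c * (k * (s * ae)))); last by ring.
    by rewrite ler_wpM2l // ler_wpM2l.
  have h4 : nx%:R * (rho * enorm (X1 - (phi t).2)) <= by_ * enorm (X1 - (phi t).2).
    rewrite byd mulrA mulrDl mul1r lerDl; exact: enorm_ge0.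
  apply: lerD; [exact: le_trans h1 h3 | exact: le_trans h2 h4].
move=> /(_ Hd) {Hd} /(_ s s0) Hyb.
have ybd : forall t : R, 0 <= t <= t0 -> enorm (y t) <= s * Y.
  move=> t ht; apply: le_trans (Hyb t ht) _.
  rewrite Yd; exact: gron_bound.
pose d := (s^-1 \*: (fst \o psi)) - (fst \o phi).
have dE : forall t : R, d t = s^-1 *: (psi t).1 - (phi t).1 by [].
have dd : forall t : R, 0 < t ->
    is_derive t 1 d (s^-1 *: F (psi t) - dFde F 0 (phi t).2 (phi t).1).
  move=> t t0'.
  exact: (is_deriveB (is_deriveZ s^-1 (is_derive_fst (dvpsi t t0')))
                     (is_derive_fst (dvphi t t0'))).
have sn0 : s != 0 by rewrite gt_eqF.
have d0 : d 0 = 0 by rewrite dE psi0 /= scalerA mulVf // scale1r subrr.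
have rcd : d @ 0^'+ --> d 0.
  exact: (cvgB (cvgZl_tmp (k := s^-1) (continuous_cvg _ fc1 rcpsi)) (continuous_cvg _ fc2 rcphi)).
have Hdg := @gronwall R (fun t => enorm (d t)) (s * Ad) mu t0.
have sAd0 : 0 <= s * Ad by rewrite mulr_ge0 // ltW.
have p00d : enorm (d 0) <= 0 by rewrite d0 enorm0.
have := Hdg sAd0 mu0 p00d (rc0_enorm rcd).
have Hl : forall t : R, 0 < t <= t0 -> forall eps : R, 0 < eps -> exists2 eta : R, 0 < eta &
     forall u : R, 0 <= u -> `|u - t| < eta -> enorm (d t) - eps < enorm (d u).
  move=> t /andP[t0' _] eps e0'.
  have [eta eta0 H] := lsc_enorm (is_derive_cont (dd t t0')) e0'.
  by exists eta => // u _; apply: H.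
move=> /(_ Hl) {Hl}.
have Hd : forall t : R, 0 < t < t0 -> forall eps : R, 0 < eps -> exists2 eta : R, 0 < eta &
     forall h : R, 0 < h < eta -> enorm (d (t + h)) <=
       enorm (d t) + h * (s * Ad + mu * enorm (d t) + eps).
  move=> t /andP[t0' tt0] eps e0'.
  have [eta eta0 H] := dini_enorm (dd t t0') e0'.
  exists eta => // h hh; apply: le_trans (H h hh) _; rewrite lerD2l.
  have h0 : 0 <= h by case/andP: hh => /ltW.
  rewrite ler_wpM2l // lerD2r.
  have yb : enorm (y t) <= s * Y by apply: ybd; rewrite !ltW.
  rewrite yE in yb.
  rewrite dE.
  move: (Ekr t (ltW t0')) (Ebd t (ltW t0')) yb.
  case: (psi t) => E1 X1 /= hE1 hE2 yb.
  set xt := (phi t).2; set et := (phi t).1.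
  have decomp : s^-1 *: F (E1, X1) - dFde F 0 xt et =
      s^-1 *: (F (E1, X1) - F (0, X1) - dFde F 0 X1 E1) +
      (s^-1 *: (dFde F 0 X1 E1 - dFde F 0 xt E1) +
       dFde F 0 xt (s^-1 *: E1 - et)).
    rewrite Fz subr0 (dFdeB CF) (dFdeZ CF) !scalerBr.
    by rewrite !addrA !subrK.
  rewrite decomp.
  apply: le_trans (enormD _ _) _.
  apply: le_trans (lerD (lexx _) (enormD _ _)) _.
  have si0 : 0 <= s^-1 by rewrite invr_ge0 ltW.
  rewrite !enormZ (ger0_norm si0).
  have P0 := enorm_ge0 E1.
  have Q0 := enorm_ge0 (X1 - xt).
  have T1 := mv_Fe CF c0' (fun e' he' => bFee e' X1 (le_lt_trans he' hE1)).
  have T2 := mv_dFx CF X1 xt E1 bFxe.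
  have T3 := bFe xt (s^-1 *: E1 - et).
  have B1 : s^-1 * enorm (F (E1, X1) - F (0, X1) - dFde F 0 X1 E1) <=
            s * (ne%:R * (ne%:R * (c * k * k * ae * ae))).
    apply: le_trans (ler_wpM2l si0 T1) _.
    have PP : enorm E1 * enorm E1 <= (k * (s * ae)) * (k * (s * ae)) by apply: ler_pM.
    have : s^-1 * (ne%:R * (ne%:R * (c * enorm E1 * enorm E1))) <=
           s^-1 * (ne%:R * (ne%:R * (c * ((k * (s * ae)) * (k * (s * ae)))))).
      by rewrite ler_wpM2l // ler_wpM2l // ler_wpM2l // -(mulrA c) ler_wpM2l.
    move=> /le_trans; apply.
    rewrite le_eqVlt; apply/orP; left; apply/eqP; by field.
  have B2 : s^-1 * enorm (dFde F 0 X1 E1 - dFde F 0 xt E1) <=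
            s * (ne%:R * c * Y * k * ae).
    apply: le_trans (ler_wpM2l si0 T2) _.
    have PQ : enorm (X1 - xt) * enorm E1 <= (s * Y) * (k * (s * ae)) by apply: ler_pM.
    have : s^-1 * (ne%:R * (c * enorm (X1 - xt) * enorm E1)) <=
           s^-1 * (ne%:R * (c * ((s * Y) * (k * (s * ae))))).
      by rewrite ler_wpM2l // ler_wpM2l // -(mulrA c) ler_wpM2l.
    move=> /le_trans; apply.
    rewrite le_eqVlt; apply/orP; left; apply/eqP; by field.
  rewrite Add mulrDr -[X in _ <= X]addrA; apply: lerD => //; apply: lerD => //.
move=> /(_ Hd) {Hd} /(_ s s0) Hdb.
have dbd : enorm (d t0) <= s * Dd.
  apply: le_trans (Hdb t0 _) _; first by rewrite t00 lexx.
  rewrite Ddd; apply: gron_bound => //; first by rewrite t00 lexx.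
have -> : (phi t0).1 = s^-1 *: (psi t0).1 - d t0 by rewrite dE opprB addrC subrK.
have si0 : 0 <= s^-1 by rewrite invr_ge0 ltW.
apply: le_trans (enormD _ _) _; rewrite enormN enormZ (ger0_norm si0).
apply: lerD => //.
apply: le_trans (ler_wpM2l si0 (Ebd0 t0 t00)) _.
rewrite le_eqVlt; apply/orP; left; apply/eqP; by field.
Qed.
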